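(* Let $r\in\mathbb{N}$ and let $\bm{{\mathcal H}_x},\bm{{\mathcal H}_y}$ be finite sets of vectors of $(r+1)$-vertex graphs (each graph endowed with an ordered pair of distinguished vertices), with $t_x:=|\bm{{\mathcal H}_x}|$ and $t_y:=|\bm{{\mathcal H}_y}|$. Let $\beta_x,\beta_y,\epsilon>0$. Suppose $G$ is a sufficiently large $n$-vertex graph, $x,y\in V(G)$, and there is $U\subseteq V(G)$ with $|U|\geq\epsilon n$ such that for every $z\in U$, $x$ and $z$ are $(\bm{{\mathcal H}_x};\beta_x)$-reachable and $z$ and $y$ are $(\bm{{\mathcal H}_y};\beta_y)$-reachable. Then $x$ and $y$ are $(\bm{{\mathcal H}_x}+\bm{{\mathcal H}_y};\beta)$-reachable, where $\beta:=\frac{\epsilon\beta_x\beta_y}{2t_xt_y}$.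
   Context: Let $\bm{H}=(H^1,\dots,H^t)$ be a vector of $(r+1)$-vertex graphs, each $H^i$ with an ordered pair of distinct distinguished vertices $(w_1^i,w_2^i)$. An $\bm{H}$-path is obtained by taking vertex-disjoint copies of $H^1,\dots,H^t$ and identifying $w_2^i$ with $w_1^{i+1}$ for $i\in[t-1]$; its endpoints are $w_1^1$ and $w_2^t$. Two vertices $x,y$ of an $n$-vertex graph $G$ are $(\bm{H};\beta)$-reachable if there are at least $\beta n^{tr-1}$ distinct labelled embeddings of the $\bm{H}$-path into $G$ mapping the endpoints to $\{x,y\}$. For a set $\bm{{\mathcal H}}$ of such vectors, $x,y$ are $(\bm{{\mathcal H}};\beta)$-reachable if they are $(\bm{H};\beta)$-reachable for some $\bm{H}\in\bm{{\mathcal H}}$. For two such sets, $\bm{{\mathcal H}}+\tilde{\bm{{\mathcal H}}}:=\bm{{\mathcal H}}\cup\tilde{\bm{{\mathcal H}}}\cup\{(H^1,\dots,H^t,\tilde H^1,\dots,\tilde H^{\tilde t}):(H^1,\dots,H^t)\in\bm{{\mathcal H}},(\tilde H^1,\dots,\tilde H^{\tilde t})\in\tilde{\bm{{\mathcal H}}}\}$. *)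

(* Defs.v *)
From HB Require Import structures.
From mathcomp Require Import all_boot all_order all_algebra.
From mathcomp Require Import reals.
Set Implicit Arguments. Unset Strict Implicit. Unset Printing Implicit Defensive.
Import Order.TTheory GRing.Theory Num.Theory.
Local Open Scope ring_scope.

(* Adjacency is a finite function so that the type
   has decidable equality (needed to speak of finite sets = uniq seqs). *)
Definition pgraph (r : nat) : Type :=
  ({ffun 'I_r.+1 * 'I_r.+1 -> bool} * ('I_r.+1 * 'I_r.+1))%type.

Definition pg_adj r (H : pgraph r) (u v : 'I_r.+1) : bool := H.1 (u, v).
Definition pg_w1 r (H : pgraph r) : 'I_r.+1 := H.2.1.
Definition pg_w2 r (H : pgraph r) : 'I_r.+1 := H.2.2.

Definition pg_ok r (H : pgraph r) : bool :=
  [&& [forall u, forall v, pg_adj H u v == pg_adj H v u],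
      [forall u, ~~ pg_adj H u u] & pg_w1 H != pg_w2 H].

Definition pg_default r : pgraph r := ([ffun _ => false], (ord0, ord0)).

(* The H-path for Hs = (H^1,...,H^t) is the quotient of the disjoint union of
   the copies (i, u), i < t, u in V(H^i), by identifying (i, w2^i) with
   (i+1, w1^{i+1}).  [pident] is this identification relation. *)
Definition pident r (Hs : seq (pgraph r)) (i : 'I_(size Hs)) (u : 'I_r.+1)
    (j : 'I_(size Hs)) (v : 'I_r.+1) : bool :=
  let Hi := nth (pg_default r) Hs i in
  let Hj := nth (pg_default r) Hs j in
  [|| (i == j) && (u == v),
      [&& (val j == (val i).+1)%N, u == pg_w2 Hi & v == pg_w1 Hj]
    | [&& (val i == (val j).+1)%N, v == pg_w2 Hj & u == pg_w1 Hi]].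

(* A labelled embedding of the H-path into G (given as compatible maps on the
   copies) sending the endpoints w1^1 to x and w2^t to y: edges of every copy
   are mapped to edges of G, and two copy-vertices have the same image iff
   they are identified in the path (i.e. the induced map on the path is
   well defined and injective). *)
Definition path_emb r n (G : rel 'I_n) (Hs : seq (pgraph r)) (x y : 'I_n)
    (F : {ffun 'I_(size Hs) -> {ffun 'I_r.+1 -> 'I_n}}) : bool :=
  [&& [forall i : 'I_(size Hs), forall u : 'I_r.+1, forall v : 'I_r.+1,
         pg_adj (nth (pg_default r) Hs i) u v ==> G (F i u) (F i v)],
      [forall i : 'I_(size Hs), forall u : 'I_r.+1,
       forall j : 'I_(size Hs), forall v : 'I_r.+1,
         (F i u == F j v) == pident i u j v],
      [forall i : 'I_(size Hs), (val i == 0)%N ==>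
         (F i (pg_w1 (nth (pg_default r) Hs i)) == x)]
    & [forall i : 'I_(size Hs), (val i == (size Hs).-1)%N ==>
         (F i (pg_w2 (nth (pg_default r) Hs i)) == y)]].

Definition n_path_emb r n (G : rel 'I_n) (Hs : seq (pgraph r)) (x y : 'I_n) : nat :=
  #|[pred F : {ffun 'I_(size Hs) -> {ffun 'I_r.+1 -> 'I_n}} | @path_emb r n G Hs x y F]|.

(* (H; beta)-reachability; t = size Hs >= 1 and the H-path has t*r+1 vertices. *)
Definition reachable (R : realType) r n (G : rel 'I_n) (Hs : seq (pgraph r))
    (beta : R) (x y : 'I_n) : Prop :=
  (0 < size Hs)%N /\
  beta * (n%:R) ^+ (size Hs * r - 1) <= (n_path_emb G Hs x y)%:R.

Definition reachableS (R : realType) r n (G : rel 'I_n)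
    (HH : seq (seq (pgraph r))) (beta : R) (x y : 'I_n) : Prop :=
  exists2 Hs, Hs \in HH & reachable G Hs beta x y.

Definition plusH r (HH HH' : seq (seq (pgraph r))) : seq (seq (pgraph r)) :=
  HH ++ HH' ++ [seq Hs ++ Hs' | Hs <- HH, Hs' <- HH'].

(* Main.v *)
Require Import Defs.
From HB Require Import structures.
From mathcomp Require Import all_boot all_order all_algebra.
From mathcomp Require Import reals.
From mathcomp Require Import zify ring lra.
Set Implicit Arguments. Unset Strict Implicit. Unset Printing Implicit Defensive.
Import Order.TTheory GRing.Theory Num.Theory.

Lemma card_det (T A : finType) n (P : {set T}) (e : T -> A -> 'I_n) (D : {set A}) :
  {in P &, forall s t, {in D, e s =1 e t} -> s = t} -> #|P| <= n ^ #|D|.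
Proof.
move=> det.
pose f (s : T) : {ffun {d : A | d \in D} -> 'I_n} := [ffun d => e s (val d)].
have inj : {in P &, injective f}.
  move=> s t sP tP /ffunP E; apply: det => // d dD.
  by have := E (exist _ d dD); rewrite !ffunE.
rewrite -(card_in_imset inj).
apply: leq_trans (max_card _) _.
by rewrite card_ffun card_ord card_sig.
Qed.

Lemma card_det1 (T A : finType) n (P : {set T}) (e : T -> A -> 'I_n) (D : {set A}) d :
  d \in D ->
  {in P &, forall s t, {in D, e s =1 e t} -> s = t} ->
  {in P &, forall s t, {in D :\ d, e s =1 e t} -> e s d = e t d} ->
  #|P| <= n ^ (#|D| - 1).
Proof.
move=> dD det det1.
rewrite (cardsD1 d D) dD add1n subn1 /=.
apply: card_det => s t sP tP ag; apply: det => //. move=> a aD.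
case: (eqVneq a d) => [->|ad]; first exact: (det1 s t sP tP ag).
by apply: ag; rewrite !inE ad.
Qed.

Definition ev r n k (F : {ffun 'I_k -> {ffun 'I_r.+1 -> 'I_n}}) (p : 'I_k * 'I_r.+1) : 'I_n :=
  F p.1 p.2.

Lemma emb_id r n G (Hs : seq (pgraph r)) x y F : @path_emb r n G Hs x y F ->
  forall i u j v, (F i u == F j v) = pident i u j v.
Proof.
by case/and4P => _ /forallP H _ _ i u j v; move: (H i) => /forallP/(_ u)/forallP/(_ j)/forallP/(_ v)/eqP.
Qed.

Lemma emb_start r n G (Hs : seq (pgraph r)) x y F : @path_emb r n G Hs x y F ->
  forall i, val i = 0%N -> F i (pg_w1 (nth (pg_default r) Hs i)) = x.
Proof.
by case/and4P => _ _ /forallP H _ i i0; move: (H i); rewrite i0 eqxx => /eqP.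
Qed.

Lemma emb_end r n G (Hs : seq (pgraph r)) x y F : @path_emb r n G Hs x y F ->
  forall i, val i = (size Hs).-1 -> F i (pg_w2 (nth (pg_default r) Hs i)) = y.
Proof.
by case/and4P => _ _ _ /forallP H i i0; move: (H i); rewrite i0 eqxx => /eqP.
Qed.

Lemma emb_edge r n G (Hs : seq (pgraph r)) x y F : @path_emb r n G Hs x y F ->
  forall (i : 'I_(size Hs)) u v, pg_adj (nth (pg_default r) Hs i) u v -> G (F i u) (F i v).
Proof.
by case/and4P => /forallP H _ _ _ i u v; move: (H i) => /forallP/(_ u)/forallP/(_ v)/implyP.
Qed.

Definition Sset r (Hs : seq (pgraph r)) : {set 'I_(size Hs) * 'I_r.+1} :=
  [set p : 'I_(size Hs) * 'I_r.+1 | (p.2 != pg_w1 (nth (pg_default r) Hs p.1)) &&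
     ~~ ((val p.1 == (size Hs).-1) && (p.2 == pg_w2 (nth (pg_default r) Hs p.1)))].

Lemma pg_ok_nth r (Hs : seq (pgraph r)) (i : nat) : all (@pg_ok r) Hs -> (i < size Hs)%N ->
  pg_w1 (nth (pg_default r) Hs i) != pg_w2 (nth (pg_default r) Hs i).
Proof.
by move=> /allP H lt; case/and3P: (H _ (mem_nth (pg_default r) lt)).
Qed.

Lemma cover r n G (Hs : seq (pgraph r)) (p : 'I_(size Hs) * 'I_r.+1) :
  all (@pg_ok r) Hs ->
  [\/ exists2 p', p' \in Sset Hs & (forall x z F, @path_emb r n G Hs x z F -> ev F p = ev F p'),
      (forall x z F, @path_emb r n G Hs x z F -> ev F p = x) |
      (forall x z F, @path_emb r n G Hs x z F -> ev F p = z)].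
Proof.
move=> ok; case: p => i u.
case: (eqVneq u (pg_w1 (nth (pg_default r) Hs i))) => [->|uw1].
  case: (posnP (val i)) => [i0|ipos].
    by apply: Or32 => x z F emb; rewrite /ev /=; apply: (emb_start emb).
  have lti : (i.-1 < size Hs)%N by apply: leq_ltn_trans (ltn_ord i); apply: leq_pred.
  pose i' := Ordinal lti.
  apply: Or31; exists (i', pg_w2 (nth (pg_default r) Hs i')).
    rewrite inE /= eq_sym pg_ok_nth //=.
    apply/negP => /andP [/eqP E _].
    have := ltn_ord i; move: E ipos; rewrite /=; lia.
  move=> x z F emb; rewrite /ev /=; apply/eqP; rewrite (emb_id emb) /pident.
  apply/orP; right; apply/orP; right; rewrite /= !eqxx andbT /=.
  by rewrite andbT prednK.
case E : ((val i == (size Hs).-1) && (u == pg_w2 (nth (pg_default r) Hs i))).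
  move/andP: E => [/eqP Ei /eqP Eu].
  by apply: Or33 => x z F emb; rewrite /ev /= Eu; apply: (emb_end emb).
apply: Or31; exists (i, u) => //.
by rewrite inE /= uw1 E.
Qed.

Lemma emb_det r n G (Hs : seq (pgraph r)) x z F F' :
  all (@pg_ok r) Hs ->
  @path_emb r n G Hs x z F -> @path_emb r n G Hs x z F' ->
  {in Sset Hs, forall p, ev F p = ev F' p} -> F = F'.
Proof.
move=> ok e e' ag; apply/ffunP => i; apply/ffunP => u.
case: (cover G (i, u) ok) => [[p' p'S E]|E|E].
- by rewrite -[F i u]/(ev F (i,u)) -[F' i u]/(ev F' (i,u)) (E _ _ _ e) (E _ _ _ e') ag.
- by rewrite -[F i u]/(ev F (i,u)) -[F' i u]/(ev F' (i,u)) (E _ _ _ e) (E _ _ _ e').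
- by rewrite -[F i u]/(ev F (i,u)) -[F' i u]/(ev F' (i,u)) (E _ _ _ e) (E _ _ _ e').
Qed.

Lemma card_S r (Hs : seq (pgraph r)) : all (@pg_ok r) Hs -> (0 < size Hs)%N ->
  (#|Sset Hs| <= size Hs * r - 1)%N.
Proof.
move=> ok kpos.
set k := size Hs.
have lt : (k.-1 < k)%N by rewrite prednK.
pose zv : 'I_k * 'I_r.+1 := (Ordinal lt, pg_w2 (nth (pg_default r) Hs k.-1)).
pose T1 := [set (i, pg_w1 (nth (pg_default r) Hs i)) | i : 'I_k].
have cT1 : #|T1| = k.
  rewrite card_imset ?card_ord //.
  by move=> i j [] ->.
have zT1 : zv \notin T1.
  apply/imsetP => -[i _ [E1 E2]].
  have := pg_ok_nth ok lt.
  by rewrite E2 -E1 /= eqxx.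
have sub : Sset Hs \subset ~: (zv |: T1).
  apply/subsetP => p; rewrite !inE => /andP [p1 p2].
  apply/negP => /orP [/eqP E | /imsetP [i _ E]].
  - by move: p2; rewrite E /zv /= !eqxx.
  - by move: p1; rewrite E /= eqxx.
apply: leq_trans (subset_leq_card sub) _.
rewrite cardsCs setCK cardsU1 zT1 cT1 card_prod !card_ord.
rewrite mulnS; lia.
Qed.

Definition pidentN r (Hs : seq (pgraph r)) (i : nat) (u : 'I_r.+1) (j : nat) (v : 'I_r.+1) : bool :=
  let Hi := nth (pg_default r) Hs i in
  let Hj := nth (pg_default r) Hs j in
  [|| (i == j) && (u == v),
      [&& (j == i.+1)%N, u == pg_w2 Hi & v == pg_w1 Hj]
    | [&& (i == j.+1)%N, v == pg_w2 Hj & u == pg_w1 Hi]].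

Lemma pidentE r (Hs : seq (pgraph r)) (i j : 'I_(size Hs)) u v :
  pident i u j v = pidentN Hs i u j v.
Proof. by []. Qed.

Definition comb r n (Hsx Hsy : seq (pgraph r))
  (F1 : {ffun 'I_(size Hsx) -> {ffun 'I_r.+1 -> 'I_n}})
  (F2 : {ffun 'I_(size Hsy) -> {ffun 'I_r.+1 -> 'I_n}}) :
  {ffun 'I_(size (Hsx ++ Hsy)) -> {ffun 'I_r.+1 -> 'I_n}} :=
  [ffun i => match split (cast_ord (size_cat Hsx Hsy) i) with
             | inl i1 => F1 i1 | inr i2 => F2 i2 end].

Lemma combP r n (Hsx Hsy : seq (pgraph r)) F1 F2 (i : 'I_(size (Hsx ++ Hsy))) :
  (exists2 i1 : 'I_(size Hsx), (i : nat) = i1 & @comb r n Hsx Hsy F1 F2 i = F1 i1) \/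
  (exists2 i2 : 'I_(size Hsy), (i : nat) = (size Hsx + i2)%N & @comb r n Hsx Hsy F1 F2 i = F2 i2).
Proof.
rewrite /comb ffunE.
case: splitP => [j E|k E].
  by left; exists j.
by right; exists k.
Qed.

Lemma pidentN_l r (Hsx Hsy : seq (pgraph r)) i u j v :
  (i < size Hsx)%N -> (j < size Hsx)%N ->
  pidentN (Hsx ++ Hsy) i u j v = pidentN Hsx i u j v.
Proof. by move=> il jl; rewrite /pidentN !nth_cat il jl. Qed.

Lemma pidentN_r r (Hsx Hsy : seq (pgraph r)) i u j v :
  pidentN (Hsx ++ Hsy) (size Hsx + i) u (size Hsx + j) v = pidentN Hsy i u j v.
Proof.
rewrite /pidentN !nth_cat !ltnNge !leq_addr /= !addKn.
by rewrite eqn_add2l -addnS eqn_add2l -addnS eqn_add2l.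
Qed.

Lemma pidentN_m r (Hsx Hsy : seq (pgraph r)) i u j v :
  (i < size Hsx)%N ->
  pidentN (Hsx ++ Hsy) i u (size Hsx + j) v =
  [&& (size Hsx + j == i.+1)%N, u == pg_w2 (nth (pg_default r) Hsx i)
    & v == pg_w1 (nth (pg_default r) Hsy j)].
Proof.
move=> il; rewrite /pidentN !nth_cat il ltnNge leq_addr /= addKn.
have -> : (i == size Hsx + j) = false by apply/eqP; lia.
have -> : (i == (size Hsx + j).+1) = false by apply/eqP; lia.
by rewrite /= orbF.
Qed.

Lemma pidentN_sym r (Hs : seq (pgraph r)) i u j v :
  pidentN Hs i u j v = pidentN Hs j v i u.
Proof.
rewrite /pidentN [i == j]eq_sym [u == v]eq_sym.
by case: (_ && _) => //=; rewrite orbC.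
Qed.

Lemma emb_endE r n G (Hs : seq (pgraph r)) x z F (i : 'I_(size Hs)) u :
  all (@pg_ok r) Hs -> @path_emb r n G Hs x z F ->
  (F i u == z) = ((i : nat) == (size Hs).-1) && (u == pg_w2 (nth (pg_default r) Hs i)).
Proof.
move=> ok e.
have kpos : (0 < size Hs)%N by apply: leq_ltn_trans (ltn_ord i).
have lt : ((size Hs).-1 < size Hs)%N by rewrite prednK.
rewrite -(emb_end e (i:=Ordinal lt) erefl) (emb_id e) pidentE /pidentN /=.
have ok' : (pg_w2 (nth (pg_default r) Hs (size Hs).-1) ==
            pg_w1 (nth (pg_default r) Hs (size Hs).-1)) = false.
  by rewrite eq_sym; apply/negbTE/pg_ok_nth.
have ik : (nat_of_ord i == (size Hs).-1.+1) = false.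
  by rewrite prednK //; apply: ltn_eqF.
rewrite ok' !andbF ik /= !orbF.
by case: eqP => // ->.
Qed.

Lemma emb_startE r n G (Hs : seq (pgraph r)) x z F (i : 'I_(size Hs)) u :
  all (@pg_ok r) Hs -> @path_emb r n G Hs x z F ->
  (F i u == x) = ((i : nat) == 0%N) && (u == pg_w1 (nth (pg_default r) Hs i)).
Proof.
move=> ok e.
have kpos : (0 < size Hs)%N by apply: leq_ltn_trans (ltn_ord i).
rewrite -(emb_start e (i:=Ordinal kpos) erefl) (emb_id e) pidentE /pidentN /=.
have ok' : (pg_w1 (nth (pg_default r) Hs 0) ==
            pg_w2 (nth (pg_default r) Hs 0)) = false.
  by apply/negbTE/pg_ok_nth.
rewrite ok' !andbF /= !orbF.
by case: eqP => // ->.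
Qed.

Definition goodb r n (Hsx Hsy : seq (pgraph r)) (z : 'I_n)
  (F1 : {ffun 'I_(size Hsx) -> {ffun 'I_r.+1 -> 'I_n}})
  (F2 : {ffun 'I_(size Hsy) -> {ffun 'I_r.+1 -> 'I_n}}) : bool :=
  [forall p, forall q, (ev F1 p == ev F2 q) ==> (ev F1 p == z)].

Lemma comb_mixed r n G (Hsx Hsy : seq (pgraph r)) x y z F1 F2 (i1 : 'I_(size Hsx)) (j2 : 'I_(size Hsy)) u v :
  all (@pg_ok r) Hsx -> all (@pg_ok r) Hsy ->
  @path_emb r n G Hsx x z F1 -> @path_emb r n G Hsy z y F2 -> goodb z F1 F2 ->
  (F1 i1 u == F2 j2 v) = pidentN (Hsx ++ Hsy) i1 u (size Hsx + j2) v.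
Proof.
move=> okx oky e1 e2 /forallP gd.
rewrite pidentN_m //.
apply/idP/idP.
  move=> /eqP E.
  have Z : F1 i1 u == z.
    by move: (gd (i1, u)) => /forallP /(_ (j2, v)) /implyP; apply; apply/eqP.
  have Z' : F2 j2 v == z by rewrite -E.
  move: Z Z'; rewrite (emb_endE _ _ okx e1) (emb_startE _ _ oky e2).
  case/andP => /eqP Ei ->; case/andP => /eqP Ej ->; rewrite !andbT.
  have := ltn_ord i1; move: Ei Ej; lia.
case/and3P => /eqP Eij Eu Ev.
have Z : F1 i1 u == z.
  rewrite (emb_endE _ _ okx e1) Eu andbT.
  have := ltn_ord i1; move: Eij; lia.
have Z' : F2 j2 v == z.
  rewrite (emb_startE _ _ oky e2) Ev andbT.
  have := ltn_ord i1; move: Eij; lia.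
by rewrite (eqP Z) (eqP Z').
Qed.

Lemma combL r n (Hsx Hsy : seq (pgraph r)) F1 F2 (i : 'I_(size (Hsx ++ Hsy))) (i1 : 'I_(size Hsx)) :
  (i : nat) = i1 -> @comb r n Hsx Hsy F1 F2 i = F1 i1.
Proof.
move=> E; case: (combP F1 F2 i) => [[j Ej ->]|[j Ej _]].
  by congr (F1 _); apply: val_inj; rewrite /= -Ej.
by have := ltn_ord i1; rewrite -E Ej ltnNge leq_addr.
Qed.

Lemma combR r n (Hsx Hsy : seq (pgraph r)) F1 F2 (i : 'I_(size (Hsx ++ Hsy))) (i2 : 'I_(size Hsy)) :
  (i : nat) = (size Hsx + i2)%N -> @comb r n Hsx Hsy F1 F2 i = F2 i2.
Proof.
move=> E; case: (combP F1 F2 i) => [[j Ej _]|[j Ej ->]].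
  by have := ltn_ord j; rewrite -Ej E ltnNge leq_addr.
by congr (F2 _); apply: val_inj; move: Ej; rewrite E => /eqP; rewrite eqn_add2l => /eqP.
Qed.

Lemma comb_inj r n (Hsx Hsy : seq (pgraph r)) F1 F2 F1' F2' :
  @comb r n Hsx Hsy F1 F2 = comb F1' F2' -> F1 = F1' /\ F2 = F2'.
Proof.
move=> E; split; apply/ffunP.
  move=> i1.
  have lt : (i1 < size (Hsx ++ Hsy))%N by rewrite size_cat; apply: ltn_addr.
  by rewrite -(combL F1 F2 (i:=Ordinal lt) (i1:=i1) erefl) E (combL _ _ (i:=Ordinal lt) (i1:=i1)).
move=> i2.
have lt : (size Hsx + i2 < size (Hsx ++ Hsy))%N by rewrite size_cat ltn_add2l.
by rewrite -(combR F1 F2 (i:=Ordinal lt) (i2:=i2) erefl) E (combR _ _ (i:=Ordinal lt) (i2:=i2)).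
Qed.

Lemma comb_emb r n G (Hsx Hsy : seq (pgraph r)) x y z F1 F2 :
  all (@pg_ok r) Hsx -> all (@pg_ok r) Hsy ->
  (0 < size Hsx)%N -> (0 < size Hsy)%N ->
  @path_emb r n G Hsx x z F1 -> @path_emb r n G Hsy z y F2 -> goodb z F1 F2 ->
  @path_emb r n G (Hsx ++ Hsy) x y (comb F1 F2).
Proof.
move=> okx oky ax bx e1 e2 gd.
apply/and4P; split.
- apply/forallP => i; apply/forallP => u; apply/forallP => v; apply/implyP.
  case: (combP F1 F2 i) => [[i1 Ei ->]|[i2 Ei ->]].
    by rewrite nth_cat Ei ltn_ord => adj; apply: (emb_edge e1 adj).
  by rewrite nth_cat Ei ltnNge leq_addr /= addKn => adj; apply: (emb_edge e2 adj).
- apply/forallP => i; apply/forallP => u; apply/forallP => j; apply/forallP => v.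
  apply/eqP; rewrite pidentE.
  case: (combP F1 F2 i) => [[i1 Ei ->]|[i2 Ei ->]];
  case: (combP F1 F2 j) => [[j1 Ej ->]|[j2 Ej ->]]; rewrite Ei Ej.
  + by rewrite pidentN_l // -pidentE (emb_id e1).
  + exact: comb_mixed e1 e2 gd.
  + by rewrite pidentN_sym eq_sym; apply: comb_mixed e1 e2 gd.
  + by rewrite pidentN_r -pidentE (emb_id e2).
- apply/forallP => i; apply/implyP => /eqP i0.
  case: (combP F1 F2 i) => [[i1 Ei ->]|[i2 Ei ->]].
    rewrite nth_cat Ei ltn_ord; apply/eqP; apply: (emb_start e1).
    by rewrite /= -Ei.
  by exfalso; move: i0; rewrite /= Ei; lia.
- apply/forallP => i; apply/implyP => /eqP i0.
  case: (combP F1 F2 i) => [[i1 Ei ->]|[i2 Ei ->]].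
    by exfalso; have := ltn_ord i1; have := size_cat Hsx Hsy; move: i0; rewrite /= Ei; lia.
  rewrite nth_cat Ei ltnNge leq_addr /= addKn; apply/eqP; apply: (emb_end e2).
  by move: i0 (size_cat Hsx Hsy); rewrite /= Ei; lia.
Qed.

Lemma card_bigcup_le (T I : finType) (F : I -> {set T}) :
  (#|\bigcup_i F i| <= \sum_i #|F i|)%N.
Proof.
elim/big_rec2: _ => [|i U s _ IH]; first by rewrite cards0.
apply: leq_trans (leq_card_setU _ _) _.
by rewrite leq_add2l.
Qed.

Notation Tr r n Hsx Hsy :=
  ('I_n * ({ffun 'I_(size Hsx) -> {ffun 'I_r.+1 -> 'I_n}} *
           {ffun 'I_(size Hsy) -> {ffun 'I_r.+1 -> 'I_n}}))%type.

Definition All r n (G : rel 'I_n) (Hsx Hsy : seq (pgraph r)) (x y : 'I_n) (C : {set 'I_n}) : {set Tr r n Hsx Hsy} :=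
  [set t : Tr r n Hsx Hsy | [&& t.1 \in C, @path_emb r n G Hsx x t.1 t.2.1 &
                               @path_emb r n G Hsy t.1 y t.2.2]].

Lemma card_All r n (G : rel 'I_n) (Hsx Hsy : seq (pgraph r)) (x y : 'I_n) (C : {set 'I_n}) :
  #|All G Hsx Hsy x y C| = (\sum_(z in C) n_path_emb G Hsx x z * n_path_emb G Hsy z y)%N.
Proof.
rewrite -sum1_card big_mkcond /=.
rewrite (eq_bigr (fun t : Tr r n Hsx Hsy => (fun z p => if (z, p) \in All G Hsx Hsy x y C then 1 else 0)%N t.1 t.2)); last by case.
rewrite -(pair_bigA _ (fun z p => if (z, p) \in All G Hsx Hsy x y C then 1 else 0)%N) /= [RHS]big_mkcond /=.
apply: eq_bigr => z _.
case: (boolP (z \in C)) => zC.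
  rewrite /n_path_emb -!sum1_card big_distrlr /= pair_big /= [RHS]big_mkcond /=.
  apply: eq_bigr => -[F1 F2] _ /=.
  by rewrite !inE /= zC.
rewrite big1 // => -[F1 F2] _.
by rewrite inE /= (negbTE zC).
Qed.

Definition GoodS r n (Hsx Hsy : seq (pgraph r)) : {set Tr r n Hsx Hsy} :=
  [set t : Tr r n Hsx Hsy | goodb t.1 t.2.1 t.2.2].

Lemma z_of r n (G : rel 'I_n) (Hs : seq (pgraph r)) x z F (lt : ((size Hs).-1 < size Hs)%N) :
  @path_emb r n G Hs x z F -> z = ev F (Ordinal lt, pg_w2 (nth (pg_default r) Hs (size Hs).-1)).
Proof. by move=> e; rewrite /ev /= (emb_end e (i:=Ordinal lt)). Qed.

Lemma card_Good r n (G : rel 'I_n) (Hsx Hsy : seq (pgraph r)) (x y : 'I_n) (C : {set 'I_n}) :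
  all (@pg_ok r) Hsx -> all (@pg_ok r) Hsy ->
  (0 < size Hsx)%N -> (0 < size Hsy)%N ->
  (#|All G Hsx Hsy x y C :&: GoodS n Hsx Hsy| <= n_path_emb G (Hsx ++ Hsy) x y)%N.
Proof.
move=> okx oky ax bp.
have lt : ((size Hsx).-1 < size Hsx)%N by rewrite prednK.
pose f (t : Tr r n Hsx Hsy) := comb t.2.1 t.2.2.
have inj : {in All G Hsx Hsy x y C :&: GoodS n Hsx Hsy &, injective f}.
  move=> [z [F1 F2]] [z' [F1' F2']]; rewrite !inE /=.
  move=> /andP[/and3P[_ e1 e2] _] /andP[/and3P[_ e1' e2'] _].
  rewrite /f /= => /comb_inj [E1 E2]; subst F1' F2'.
  by rewrite (z_of lt e1) (z_of lt e1').
rewrite -(card_in_imset inj) /n_path_emb.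
apply: subset_leq_card; apply/subsetP => F /imsetP [[z [F1 F2]] H ->].
move: H; rewrite !inE /= => /andP[/and3P[_ e1 e2] gd].
exact: comb_emb okx oky ax bp e1 e2 gd.
Qed.

Definition Bad r n (G : rel 'I_n) (Hsx Hsy : seq (pgraph r)) (x y : 'I_n) (C : {set 'I_n})
  (p : 'I_(size Hsx) * 'I_r.+1) (q : 'I_(size Hsy) * 'I_r.+1) : {set Tr r n Hsx Hsy} :=
  [set t in All G Hsx Hsy x y C | (ev t.2.1 p == ev t.2.2 q) && (ev t.2.1 p != t.1)].

Lemma notGood_sub r n (G : rel 'I_n) (Hsx Hsy : seq (pgraph r)) (x y : 'I_n) (C : {set 'I_n}) :
  All G Hsx Hsy x y C :\: GoodS n Hsx Hsy \subset
  \bigcup_(pq : ('I_(size Hsx) * 'I_r.+1) * ('I_(size Hsy) * 'I_r.+1)) Bad G x y C pq.1 pq.2.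
Proof.
apply/subsetP => t; rewrite !inE => /andP [ng tA].
move: ng; rewrite /goodb => /forallPn [p /forallPn [q]].
rewrite negb_imply => /andP [E NE].
by apply/bigcupP; exists (p, q) => //; rewrite !inE tA E NE.
Qed.

Definition eT r n (Hsx Hsy : seq (pgraph r)) (t : Tr r n Hsx Hsy)
  (s : ('I_(size Hsx) * 'I_r.+1) + ('I_(size Hsy) * 'I_r.+1)) : 'I_n :=
  match s with inl p => ev t.2.1 p | inr q => ev t.2.2 q end.

Definition D0 r (Hsx Hsy : seq (pgraph r)) (zv : 'I_(size Hsx) * 'I_r.+1) :
  {set ('I_(size Hsx) * 'I_r.+1) + ('I_(size Hsy) * 'I_r.+1)} :=
  inl @: Sset Hsx :|: [set inl zv] :|: inr @: Sset Hsy.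

Lemma det_All r n (G : rel 'I_n) (Hsx Hsy : seq (pgraph r)) (x y : 'I_n) (C : {set 'I_n})
  (lt : ((size Hsx).-1 < size Hsx)%N) :
  all (@pg_ok r) Hsx -> all (@pg_ok r) Hsy ->
  {in All G Hsx Hsy x y C &, forall s t,
     {in D0 Hsy (Ordinal lt, pg_w2 (nth (pg_default r) Hsx (size Hsx).-1)), eT s =1 eT t} -> s = t}.
Proof.
move=> okx oky [z [F1 F2]] [z' [F1' F2']]; rewrite !inE /=.
move=> /and3P[_ e1 e2] /and3P[_ e1' e2'] ag.
have Ez : z = z'.
  rewrite (z_of lt e1) (z_of lt e1').
  by apply: (ag (inl _)); rewrite !inE eqxx orbT.
subst z'.
have E1 : F1 = F1'.
  apply: (emb_det okx e1 e1') => p pS.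
  by apply: (ag (inl p)); rewrite !inE imset_f.
have E2 : F2 = F2'.
  apply: (emb_det oky e2 e2') => q qS.
  by apply: (ag (inr q)); rewrite !inE imset_f ?orbT.
by rewrite E1 E2.
Qed.

Lemma r_pos r (Hs : seq (pgraph r)) : all (@pg_ok r) Hs -> (0 < size Hs)%N -> (0 < r)%N.
Proof.
move=> ok k0; have := pg_ok_nth ok k0.
case: r Hs ok k0 => // Hs _ _; rewrite (ord1 (pg_w1 _)) (ord1 (pg_w2 _)) eqxx.
by [].
Qed.

Lemma card_D0 r (Hsx Hsy : seq (pgraph r)) (zv : 'I_(size Hsx) * 'I_r.+1) :
  all (@pg_ok r) Hsx -> all (@pg_ok r) Hsy ->
  (0 < size Hsx)%N -> (0 < size Hsy)%N ->
  (#|D0 Hsy zv| <= (size Hsx + size Hsy) * r - 1)%N.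
Proof.
move=> okx oky ax bp.
have r0 := r_pos okx ax.
have hx : (1 <= size Hsx * r)%N by rewrite muln_gt0 ax r0.
have hy : (1 <= size Hsy * r)%N by rewrite muln_gt0 bp r0.
have c1 := card_S okx ax.
have c2 := card_S oky bp.
rewrite /D0.
apply: leq_trans (leq_card_setU _ _) _.
apply: leq_trans (leq_add (leq_card_setU _ _) (leqnn _)) _.
rewrite cards1 !card_imset; try by move=> ? ? [].
rewrite mulnDl; lia.
Qed.

Lemma card_Bad r n (G : rel 'I_n) (Hsx Hsy : seq (pgraph r)) (x y : 'I_n) (C : {set 'I_n}) (p : 'I_(size Hsx) * 'I_r.+1) (q : 'I_(size Hsy) * 'I_r.+1) :
  all (@pg_ok r) Hsx -> all (@pg_ok r) Hsy ->
  (0 < size Hsx)%N -> (0 < size Hsy)%N -> x != y ->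
  (#|Bad G x y C p q| <= n ^ ((size Hsx + size Hsy) * r - 2))%N.
Proof.
move=> okx oky ax bp xy.
have lt : ((size Hsx).-1 < size Hsx)%N by rewrite prednK.
set zv := (Ordinal lt, pg_w2 (nth (pg_default r) Hsx (size Hsx).-1)).
have n0 : (0 < n)%N := leq_ltn_trans (leq0n x) (ltn_ord x).
have Dc := card_D0 zv okx oky ax bp.
have sub : {subset Bad G x y C p q <= All G Hsx Hsy x y C}.
  by move=> t; rewrite inE => /andP [].
have det : {in Bad G x y C p q &, forall s t, {in D0 Hsy zv, eT s =1 eT t} -> s = t}.
  move=> s t sB tB; apply: (det_All okx oky); exact: sub.
have fin : forall d, d \in D0 Hsy zv ->
    {in Bad G x y C p q &, forall s t, {in D0 Hsy zv :\ d, eT s =1 eT t} -> eT s d = eT t d} ->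
    (#|Bad G x y C p q| <= n ^ ((size Hsx + size Hsy) * r - 2))%N.
  move=> d dD det1.
  apply: leq_trans (card_det1 dD det det1) _.
  by rewrite leq_pexp2l //; lia.
have empty : (forall t, t \in Bad G x y C p q -> False) ->
    (#|Bad G x y C p q| <= n ^ ((size Hsx + size Hsy) * r - 2))%N.
  move=> h; rewrite (_ : Bad G x y C p q = set0) ?cards0 //.
  by apply/setP => t; rewrite in_set0; apply/negP => /h.
case: (cover G p okx) => [[p' p'S Ep]|Ep|Ep]; last first.
  apply: empty => -[z [F1 F2]]; rewrite !inE /= => /andP [/and3P [_ e1 e2] /andP [/eqP E NE]].
  by move: NE; rewrite (Ep _ _ _ e1) eqxx.
all: case: (cover G q oky) => [[q' q'S Eq]|Eq|Eq].
- apply: (fin (inr q')); first by rewrite !inE imset_f ?orbT.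
  move=> [z [F1 F2]] [z' [F1' F2']]; rewrite !inE /=.
  move=> /andP [/and3P [_ e1 e2] /andP [/eqP E _]] /andP [/and3P [_ e1' e2'] /andP [/eqP E' _]] ag.
  by rewrite /= -(Eq _ _ _ e2) -(Eq _ _ _ e2') -E -E' (Ep _ _ _ e1) (Ep _ _ _ e1').
- apply: empty => -[z [F1 F2]]; rewrite !inE /= => /andP [/and3P [_ e1 e2] /andP [/eqP E NE]].
  by move: NE; rewrite E (Eq _ _ _ e2) eqxx.
- apply: empty => -[z [F1 F2]]; rewrite !inE /= => /andP [/and3P [_ e1 e2] /andP [/eqP E NE]].
  by move: xy; rewrite -(Ep _ _ _ e1) E (Eq _ _ _ e2) eqxx.
- apply: (fin (inr q')); first by rewrite !inE imset_f ?orbT.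
  move=> [z [F1 F2]] [z' [F1' F2']]; rewrite !inE /=.
  move=> /andP [/and3P [_ e1 e2] /andP [/eqP E _]] /andP [/and3P [_ e1' e2'] /andP [/eqP E' _]] ag.
  rewrite /= -(Eq _ _ _ e2) -(Eq _ _ _ e2') -E -E' (Ep _ _ _ e1) (Ep _ _ _ e1').
  by apply: (ag (inl p')); rewrite !inE imset_f.
- apply: empty => -[z [F1 F2]]; rewrite !inE /= => /andP [/and3P [_ e1 e2] /andP [/eqP E NE]].
  by move: NE; rewrite E (Eq _ _ _ e2) eqxx.
- apply: (fin (inl p')); first by rewrite !inE imset_f.
  move=> [z [F1 F2]] [z' [F1' F2']]; rewrite !inE /=.
  move=> /andP [/and3P [_ e1 e2] /andP [/eqP E _]] /andP [/and3P [_ e1' e2'] /andP [/eqP E' _]] ag.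
  by rewrite /= -(Ep _ _ _ e1) -(Ep _ _ _ e1') E E' (Eq _ _ _ e2) (Eq _ _ _ e2').
Qed.

Lemma count_main r n (G : rel 'I_n) (Hsx Hsy : seq (pgraph r)) (x y : 'I_n) (C : {set 'I_n}) :
  all (@pg_ok r) Hsx -> all (@pg_ok r) Hsy ->
  (0 < size Hsx)%N -> (0 < size Hsy)%N -> x != y ->
  (\sum_(z in C) n_path_emb G Hsx x z * n_path_emb G Hsy z y <=
   n_path_emb G (Hsx ++ Hsy) x y +
   (size Hsx * r.+1) * (size Hsy * r.+1) * n ^ ((size Hsx + size Hsy) * r - 2))%N.
Proof.
move=> okx oky ax bp xy.
rewrite -card_All -(cardsID (GoodS n Hsx Hsy) (All G Hsx Hsy x y C)).
apply: leq_add; first exact: card_Good.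
have := subset_leq_card (@notGood_sub r n G Hsx Hsy x y C). move=> h; apply: leq_trans h _.
apply: leq_trans (card_bigcup_le (fun pq : ('I_(size Hsx) * 'I_r.+1) * ('I_(size Hsy) * 'I_r.+1) => Bad G x y C pq.1 pq.2)) _.
apply: leq_trans (_ : _ <= \sum_(pq : ('I_(size Hsx) * 'I_r.+1) * ('I_(size Hsy) * 'I_r.+1)) n ^ ((size Hsx + size Hsy) * r - 2))%N _.
  by apply: leq_sum => pq _; apply: card_Bad.
by rewrite sum_nat_const !card_prod !card_ord.
Qed.

Lemma pigeon (I : finType) (f : I -> nat) (i0 : I) : exists i, (\sum_j f j <= #|I| * f i)%N.
Proof.
case: (@arg_maxnP I i0 xpredT f erefl) => i _ Hi.
exists i; apply: leq_trans (_ : _ <= \sum_(j : I) f i)%N _; first by apply: leq_sum => j _; apply: Hi.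
by rewrite sum_nat_const.
Qed.

Local Open Scope ring_scope.

Lemma arith1 a b r : (1 <= a * r)%N -> (1 <= b * r)%N ->
  (a * r - 1 + (b * r - 1) = (a + b) * r - 2)%N.
Proof. rewrite mulnDl; lia. Qed.

Lemma arith2 a b r : (1 <= a * r)%N -> (1 <= b * r)%N ->
  ((a + b) * r - 1 = ((a + b) * r - 2).+1)%N.
Proof. rewrite mulnDl; lia. Qed.

Lemma final_ineq (R : realType) (eps bx byy K KK T c nn P Nc N Sm : R) :
  0 < eps -> 0 < bx -> 0 < byy -> 0 < T -> 0 <= P ->
  KK <= K ->
  c * (bx * byy * P) <= Sm -> Sm <= Nc + KK * P ->
  eps * nn <= T * c ->
  2 * K * T / (eps * bx * byy) < N -> N < nn ->
  eps * bx * byy / (2 * T) * (nn * P) <= Nc.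
Proof.
move=> e0 b0 b1 T0 P0 KK0 S1 S2 UC hN Nn.
have q0 : 0 < eps * bx * byy by rewrite !mulr_gt0.
have h1 : 2 * K * T < eps * bx * byy * nn.
  move: hN; rewrite ltr_pdivrMr // => h; apply: lt_trans h _.
  by rewrite mulrC ltr_pM2l.
have h2 : eps * nn * (bx * byy) <= T * c * (bx * byy).
  by rewrite ler_wpM2r // mulr_ge0 // ltW.
have h3 : KK * T <= K * T by rewrite ler_wpM2r // ltW.
have h4 : eps * bx * byy / (2 * T) * nn <= c * bx * byy - KK.
  rewrite mulrAC ler_pdivrMr ?mulr_gt0 //; lra.
rewrite mulrA; apply: le_trans (ler_wpM2r P0 h4) _.
lra.
Qed.

Lemma archi_nat (R : realType) (x : R) : 0 <= x -> exists N : nat, x < N%:R.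
Proof. by move=> h; exists (Num.bound x); apply: Num.Theory.archi_boundP. Qed.

Unset Implicit Arguments.
Theorem lemma6p10 (R : realType) (r : nat) (Hx Hy : seq (seq (pgraph r)))
    (betax betay eps : R) :
  uniq Hx -> uniq Hy ->
  all (all (@pg_ok r)) Hx -> all (all (@pg_ok r)) Hy ->
  0 < betax -> 0 < betay -> 0 < eps ->
  exists n0 : nat, forall (n : nat) (G : rel 'I_n),
    (n0 <= n)%N -> symmetric G -> irreflexive G ->
    forall (x y : 'I_n) (U : {set 'I_n}),
      x != y ->
      eps * n%:R <= #|U|%:R ->
      (forall z, z \in U ->
         reachableS G Hx betax x z /\ reachableS G Hy betay z y) ->
      reachableS G (plusH Hx Hy)
        (eps * betax * betay / (2 * (size Hx)%:R * (size Hy)%:R)) x y.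
Proof.
move=> uHx uHy okHx okHy bx0 by0 e0.
pose M := (\max_(s <- Hx ++ Hy) size s)%N.
pose K : nat := (M * r.+1 * (M * r.+1))%N.
have q0 : 0 < eps * betax * betay by rewrite !mulr_gt0.
have [N hN] : exists N : nat,
    2 * K%:R * (size Hx)%:R * (size Hy)%:R / (eps * betax * betay) < N%:R.
  apply: archi_nat; apply: divr_ge0; last exact: ltW.
  by rewrite !mulr_ge0 ?ler0n.
exists N.+1 => n G nN _ _ x y U xy hU hreach.
have n0 : (0 < n)%N by apply: leq_trans nN.
have Upos : (0 < #|U|)%N.
  rewrite lt0n; apply/negP => /eqP h; move: hU; rewrite h.
  have : 0 < eps * n%:R by rewrite mulr_gt0 // ltr0n.
  lra.
have [z0 z0U] := card_gt0P Upos.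
have [[Hs0 Hs0in _] [Hs1 Hs1in _]] := hreach z0 z0U.
have tx0 : (0 < size Hx)%N.
  by apply: leq_ltn_trans (leq0n (index Hs0 Hx)) _; rewrite index_mem.
have ty0 : (0 < size Hy)%N.
  by apply: leq_ltn_trans (leq0n (index Hs1 Hy)) _; rewrite index_mem.
pose reachb (Hs : seq (pgraph r)) (beta : R) (a b : 'I_n) :=
  (0 < size Hs)%N && (beta * n%:R ^+ (size Hs * r - 1) <= (n_path_emb G Hs a b)%:R).
pose Cs (ij : 'I_(size Hx) * 'I_(size Hy)) :=
  [set z in U | reachb (nth [::] Hx ij.1) betax x z && reachb (nth [::] Hy ij.2) betay z y].
have cover : U \subset \bigcup_ij Cs ij.
  apply/subsetP => z zU; have [[Hs2 in2 r2] [Hs3 in3 r3]] := hreach z zU.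
  have i2 : (index Hs2 Hx < size Hx)%N by rewrite index_mem.
  have i3 : (index Hs3 Hy < size Hy)%N by rewrite index_mem.
  apply/bigcupP; exists (Ordinal i2, Ordinal i3) => //.
  rewrite inE zU /= !nth_index //.
  by rewrite /reachb; case: r2 => -> ->; case: r3 => -> ->.
have [ij hij] := pigeon (fun ij => #|Cs ij|) (Ordinal tx0, Ordinal ty0).
have Ucard : (#|U| <= size Hx * size Hy * #|Cs ij|)%N.
  apply: leq_trans (subset_leq_card cover) _.
  apply: leq_trans (card_bigcup_le Cs) _.
  by apply: leq_trans hij _; rewrite card_prod !card_ord.
set C := Cs ij in Ucard.
set Hsx := nth [::] Hx ij.1.
set Hsy := nth [::] Hy ij.2.
have Cpos : (0 < #|C|)%N.
  rewrite lt0n; apply/negP => /eqP h; move: Ucard; rewrite h muln0 leqn0 => /eqP U0; by rewrite U0 in Upos.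
have [z1 z1C] := card_gt0P Cpos.
have ax : (0 < size Hsx)%N.
  by move: z1C; rewrite inE => /andP [_ /andP [/andP [-> _] _]].
have bp : (0 < size Hsy)%N.
  by move: z1C; rewrite inE => /andP [_ /andP [_ /andP [-> _]]].
have inx : Hsx \in Hx by apply: mem_nth.
have iny : Hsy \in Hy by apply: mem_nth.
have okx : all (@pg_ok r) Hsx by apply: (allP okHx).
have oky : all (@pg_ok r) Hsy by apply: (allP okHy).
have r0 := r_pos okx ax.
have aM : (size Hsx <= M)%N.
  by apply: (leq_bigmax_seq (P := xpredT) (F := fun s : seq (pgraph r) => size s)); rewrite // mem_cat inx.
have bM : (size Hsy <= M)%N.
  by apply: (leq_bigmax_seq (P := xpredT) (F := fun s : seq (pgraph r) => size s)); rewrite // mem_cat iny orbT.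
exists (Hsx ++ Hsy).
  rewrite /plusH !mem_cat; apply/orP; right; apply/orP; right.
  by apply/allpairsP; exists (Hsx, Hsy).
split; first by rewrite size_cat addn_gt0 ax.
set E2 := ((size Hsx + size Hsy) * r - 2)%N.
have ha : (1 <= size Hsx * r)%N by rewrite muln_gt0 ax r0.
have hb : (1 <= size Hsy * r)%N by rewrite muln_gt0 bp r0.
have e1 : (size Hsx * r - 1 + (size Hsy * r - 1) = E2)%N by rewrite /E2 arith1.
have e2 : (size (Hsx ++ Hsy) * r - 1 = E2.+1)%N by rewrite /E2 size_cat arith2.
have cm := count_main G C okx oky ax bp xy.
set KK := (size Hsx * r.+1 * (size Hsy * r.+1))%N in cm.
have KKK : (KK <= K)%N by rewrite /KK /K leq_mul // leq_mul.
set Nc := n_path_emb G (Hsx ++ Hsy) x y in cm *.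
have S1 : #|C|%:R * (betax * betay * n%:R ^+ E2) <=
          (\sum_(z in C) n_path_emb G Hsx x z * n_path_emb G Hsy z y)%:R.
  rewrite mulr_natl -sumr_const natr_sum; apply: ler_sum => z zC.
  move: zC; rewrite inE => /andP [_ /andP [/andP [_ h1] /andP [_ h2]]].
  rewrite natrM -e1 exprD.
  have -> : betax * betay * (n%:R ^+ (size Hsx * r - 1) * n%:R ^+ (size Hsy * r - 1)) =
            (betax * n%:R ^+ (size Hsx * r - 1)) * (betay * n%:R ^+ (size Hsy * r - 1)) by ring.
  by apply: ler_pM => //; rewrite mulr_ge0 ?exprn_ge0 ?ler0n // ltW.
have S2 : (\sum_(z in C) n_path_emb G Hsx x z * n_path_emb G Hsy z y)%:R <=
          Nc%:R + KK%:R * n%:R ^+ E2 :> R.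
  by rewrite -natrX -natrM -natrD ler_nat.
have UC : eps * n%:R <= (size Hx)%:R * (size Hy)%:R * #|C|%:R.
  apply: le_trans hU _; rewrite -!natrM ler_nat //.
have KKr : KK%:R <= K%:R :> R by rewrite ler_nat.
have Nn : N%:R < n%:R :> R by rewrite ltr_nat.
have T0 : 0 < (size Hx)%:R * (size Hy)%:R :> R by rewrite mulr_gt0 // ltr0n.
have P0 : 0 <= n%:R ^+ E2 :> R by rewrite exprn_ge0 // ler0n.
rewrite e2 exprS -(mulrA 2).
apply: (final_ineq e0 bx0 by0 T0 P0 KKr S1 S2 UC _ Nn).
by move: hN; rewrite -(mulrA (2 * K%:R)).
Qed.
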